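(* Let $\mathcal H$ be an infinite-dimensional complex Hilbert space and let $\mathcal G_f(\mathcal H)$ be the set of those $t\in\mathcal V_f(\mathcal H)$ for which there exists $A\in\mathcal V(\mathcal H)$ with $D(A)=D(t)$ and $t(x,y)=(Ax,y)$ for all $x,y\in D(t)$. Then $(\mathcal G_f(\mathcal H);\oplus_{|\mathcal G_f(\mathcal H)},o)$ is a sub-generalized effect algebra of $(\mathcal V_f(\mathcal H);\oplus,o)$ and is isomorphic to the generalized effect algebra $(\mathcal V(\mathcal H);\oplus_{\mathcal D},O)$.
   Context: Bilinear forms $t$ on $\mathcal H$ are sesquilinear maps $D(t)\times D(t)\to\mathbb C$ on a dense linear subspace $D(t)$ (linear in the first argument); $t$ is positive if $t(x,x)\ge0$ on $D(t)$, bounded if $\sup\{t(x,x)\mid x\in D(t),\|x\|=1\}<\infty$. The sum $t+s$ has domain $D(t)\cap D(s)$. $o$ is the zero form on $\mathcal H$. $\mathcal V_f(\mathcal H)$ is the set of positive bilinear forms with dense domain such that $D(t)=\mathcal H$ whenever $t$ is bounded; $t\oplus s$ is defined iff $t$ or $s$ is bounded or $D(t)=D(s)$, and then $t\oplus s=t+s$. $\mathcal V(\mathcal H)$ is the set of densely defined linear operators $A:D(A)\to\mathcal H$ with $(Ax,x)\ge0$ for all $x\in D(A)$ and with $D(A)=\mathcal H$ whenever $A$ is bounded; for $A,B\in\mathcal V(\mathcal H)$, $A\oplus_{\mathcal D}B$ is defined iff $A$ or $B$ is bounded or $D(A)=D(B)$, and then $A\oplus_{\mathcal D}B=A+B$ (on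 $D(A)\cap D(B)$); $O$ is the zero operator. A generalized effect algebra is a structure $(E;\oplus,0)$ with a partial operation that is commutative and associative (when one side is defined), has $x\oplus0=x$, is cancellative, and satisfies $x\oplus y=0\Rightarrow x=y=0$. A subset $Q\subseteq E$ is a sub-generalized effect algebra if $0\in Q$ and whenever $x\oplus y=z$ in $E$ with two of $x,y,z$ in $Q$, all three are in $Q$. For $Q\subseteq E$, $x\oplus_{|Q}y$ is defined iff $x\oplus y$ is defined in $E$ and lies in $Q$, and then equals $x\oplus y$. *)

(* Defs.v *)
From HB Require Import structures.
From mathcomp Require Import all_boot all_order all_algebra.
From mathcomp Require Import boolp classical_sets reals.
From mathcomp Require Import complex.
Set Implicit Arguments. Unset Strict Implicit. Unset Printing Implicit Defensive.
Import Order.TTheory GRing.Theory Num.Theory.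
Local Open Scope ring_scope.
Local Open Scope classical_set_scope.

(* The inner product ip is linear in the first argument.               *)
Section Hilbert.
Variables (R : realType) (H : lmodType R[i]) (ip : H -> H -> R[i]).

Definition inner_product : Prop :=
  [/\ (forall (a : R[i]) (x y z : H), ip (a *: x + y) z = a * ip x z + ip y z),
      (forall x y : H, ip y x = (ip x y)^*),
      (forall x : H, 0 <= ip x x) &
      (forall x : H, ip x x = 0 -> x = 0)].

Definition dist2 (x y : H) : R[i] := ip (x - y) (x - y).

Definition hilbert_complete : Prop :=
  forall u : nat -> H,
    (forall e : R[i], 0 < e -> exists N : nat, forall m n : nat,
        (N <= m)%N -> (N <= n)%N -> dist2 (u m) (u n) < e) ->
    exists l : H, forall e : R[i], 0 < e -> exists N : nat, forall n : nat,
        (N <= n)%N -> dist2 (u n) l < e.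

Definition hilbert_space : Prop := inner_product /\ hilbert_complete.

Definition infinite_dimensional : Prop :=
  forall s : seq H, exists x : H,
    ~ exists c : nat -> R[i], x = \sum_(i < size s) c i *: nth 0 s i.

Definition linear_subspace (D : set H) : Prop :=
  D 0 /\ forall (a : R[i]) (x y : H), D x -> D y -> D (a *: x + y).

Definition dense (D : set H) : Prop :=
  forall (x : H) (e : R[i]), 0 < e -> exists2 d : H, D d & dist2 x d < e.

Definition dense_subspace (D : set H) : Prop := linear_subspace D /\ dense D.

(* Bilinear (sesquilinear) forms with domain: a form is a pair         *)
(* (D(t), t); values outside D(t) x D(t) are normalised to 0 so that   *)
(* equality of forms is Leibniz equality.                              *)
Record form := Form { fdom : set H ; fval : H -> H -> R[i] }.

Definition form_sum (t s : form) : form :=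
  Form (fdom t `&` fdom s)
       (fun x y => if `[< (fdom t `&` fdom s) x /\ (fdom t `&` fdom s) y >]
                   then fval t x y + fval s x y else 0).

Definition zero_form : form := Form setT (fun _ _ => 0).

Definition form_bounded (t : form) : Prop :=
  exists M : R[i], forall x : H, fdom t x -> ip x x = 1 -> fval t x x <= M.

Definition Vf : set form := [set t |
  [/\ dense_subspace (fdom t),
      (forall x y, ~ (fdom t x /\ fdom t y) -> fval t x y = 0) &
    [/\
      (forall (a : R[i]) x y z, fdom t x -> fdom t y -> fdom t z ->
          fval t (a *: x + y) z = a * fval t x z + fval t y z),
      (forall (a : R[i]) x y z, fdom t x -> fdom t y -> fdom t z ->
          fval t z (a *: x + y) = a^* * fval t z x + fval t z y),
      (forall x, fdom t x -> 0 <= fval t x x) &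
      (form_bounded t -> fdom t = setT)]]].

Definition form_oplus (t s : form) : option form :=
  if `[< form_bounded t \/ form_bounded s \/ fdom t = fdom s >]
  then Some (form_sum t s) else None.

(* Linear operators with domain, normalised to 0 outside D(A).         *)
Record oper := Oper { odom : set H ; oval : H -> H }.

Definition oper_sum (A B : oper) : oper :=
  Oper (odom A `&` odom B)
       (fun x => if `[< (odom A `&` odom B) x >] then oval A x + oval B x else 0).

Definition zero_oper : oper := Oper setT (fun _ => 0).

Definition oper_bounded (A : oper) : Prop :=
  exists M : R[i], forall x : H, odom A x -> ip x x = 1 ->
    ip (oval A x) (oval A x) <= M.

Definition Vop : set oper := [set A |
  [/\ dense_subspace (odom A),
      (forall x, ~ odom A x -> oval A x = 0),
      (forall (a : R[i]) x y, odom A x -> odom A y ->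
          oval A (a *: x + y) = a *: oval A x + oval A y),
      (forall x, odom A x -> 0 <= ip (oval A x) x) &
      (oper_bounded A -> odom A = setT)]].

Definition oper_oplusD (A B : oper) : option oper :=
  if `[< oper_bounded A \/ oper_bounded B \/ odom A = odom B >]
  then Some (oper_sum A B) else None.

Definition Gf : set form := [set t | Vf t /\
  exists2 A : oper, Vop A &
    odom A = fdom t /\
    forall x y, fdom t x -> fdom t y -> fval t x y = ip (oval A x) y].

End Hilbert.

(* Generalized effect algebras given by a carrier set S in a type T,   *)
(* a partial operation op : T -> T -> option T and a zero.             *)

Definition restrict_op {T : Type} (Q : set T) (op : T -> T -> option T)
  (x y : T) : option T :=
  match op x y with
  | Some z => if `[< Q z >] then Some z else None
  | None => None
  end.

Definition sub_GEA {T : Type} (S : set T) (op : T -> T -> option T) (z0 : T)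
  (Q : set T) : Prop :=
  [/\ Q `<=` S, Q z0 &
      forall x y z, S x -> S y -> S z -> op x y = Some z ->
        ((Q x /\ Q y) \/ (Q x /\ Q z) \/ (Q y /\ Q z)) ->
        [/\ Q x, Q y & Q z]].

Definition GEA_iso {T1 T2 : Type}
  (S1 : set T1) (op1 : T1 -> T1 -> option T1) (z1 : T1)
  (S2 : set T2) (op2 : T2 -> T2 -> option T2) (z2 : T2) (phi : T1 -> T2) : Prop :=
  [/\ (forall x, S1 x -> S2 (phi x)),
      (forall x y, S1 x -> S1 y -> phi x = phi y -> x = y),
      (forall y, S2 y -> exists2 x, S1 x & phi x = y),
      phi z1 = z2 &
      (forall x y, S1 x -> S1 y -> op2 (phi x) (phi y) = omap phi (op1 x y))].

Definition GEA_isomorphic {T1 T2 : Type}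
  (S1 : set T1) (op1 : T1 -> T1 -> option T1) (z1 : T1)
  (S2 : set T2) (op2 : T2 -> T2 -> option T2) (z2 : T2) : Prop :=
  exists phi : T1 -> T2, GEA_iso S1 op1 z1 S2 op2 z2 phi.

(* Main.v *)
Require Import Defs.
From HB Require Import structures.
From mathcomp Require Import all_boot all_order all_algebra.
From mathcomp Require Import boolp classical_sets reals.
From mathcomp Require Import complex.
From mathcomp Require Import ring lra.
Set Implicit Arguments. Unset Strict Implicit. Unset Printing Implicit Defensive.
Import Order.TTheory GRing.Theory Num.Theory.
Local Open Scope ring_scope.
Local Open Scope classical_set_scope.


Section Ctool.
Variable R : realType.
Implicit Types z w : R[i].
Local Notation rc := (real_complex R).
Local Notation re := (@complex.Re R).
Local Notation im := (@complex.Im R).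

Lemma reD z w : re (z + w) = re z + re w. Proof. by case: z; case: w. Qed.
Lemma imD z w : im (z + w) = im z + im w. Proof. by case: z; case: w. Qed.
Lemma reN z : re (- z) = - re z. Proof. by case: z. Qed.
Lemma imN z : im (- z) = - im z. Proof. by case: z. Qed.
Lemma reB z w : re (z - w) = re z - re w. Proof. by case: z; case: w. Qed.
Lemma imB z w : im (z - w) = im z - im w. Proof. by case: z; case: w. Qed.
Lemma reM z w : re (z * w) = re z * re w - im z * im w. Proof. by case: z; case: w. Qed.
Lemma imM z w : im (z * w) = re z * im w + im z * re w.
Proof. by case: z => a b; case: w => c d /=; ring. Qed.
Lemma reJ z : re (z^*) = re z. Proof. by case: z. Qed.
Lemma imJ z : im (z^*) = - im z. Proof. by case: z. Qed.
Lemma re_rc x : re (rc x) = x. Proof. by []. Qed.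
Lemma im_rc x : im (rc x) = 0. Proof. by []. Qed.
Lemma re0 : re 0 = 0. Proof. by []. Qed.
Lemma im0 : im 0 = 0. Proof. by []. Qed.
Lemma re1 : re 1 = 1. Proof. by []. Qed.
Lemma im1 : im 1 = 0. Proof. by []. Qed.
Lemma C_eq z w : re z = re w -> im z = im w -> z = w.
Proof. by case: z => a b; case: w => c d /= -> ->. Qed.
Lemma ge0_im z : 0 <= z -> im z = 0.
Proof. by rewrite lecE => /andP[/eqP ->]. Qed.
Lemma ge0_re z : 0 <= z -> 0 <= re z.
Proof. by rewrite lecE => /andP[_ ]. Qed.
Lemma ge0_rc z : 0 <= z -> z = rc (re z).
Proof. by move=> h; apply: C_eq => //=; rewrite ge0_im. Qed.
Lemma leC z w : im z = im w -> (z <= w) = (re z <= re w).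
Proof. by move=> e; rewrite lecE e eqxx. Qed.
Lemma ltC z w : im z = im w -> (z < w) = (re z < re w).
Proof. by move=> e; rewrite ltcE e eqxx. Qed.
Lemma le_re z w : z <= w -> re z <= re w.
Proof. by rewrite lecE => /andP[]. Qed.
Lemma le_im z w : z <= w -> im z = im w.
Proof. by rewrite lecE => /andP[/eqP]. Qed.
Lemma lt_re z w : z < w -> re z < re w.
Proof. by rewrite ltcE => /andP[]. Qed.
Lemma lt_im z w : z < w -> im z = im w.
Proof. by rewrite ltcE => /andP[/eqP]. Qed.
Lemma rc_ge0 x : (0 <= rc x) = (0 <= x).
Proof. by rewrite leC. Qed.
Lemma rc_lt x y : (rc x < rc y) = (x < y).
Proof. by rewrite ltC. Qed.
Lemma rc_le x y : (rc x <= rc y) = (x <= y).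
Proof. by rewrite leC. Qed.
Lemma rcM x y : rc (x * y) = rc x * rc y.
Proof. by apply: C_eq => /=; ring. Qed.
Lemma rcJ x : (rc x)^* = rc x.
Proof. by apply: C_eq => //=; rewrite oppr0. Qed.
Lemma conjK z : z^*^* = z. Proof. by case: z => a b; apply: C_eq => //=; rewrite opprK. Qed.
Lemma conjD z w : (z + w)^* = z^* + w^*. Proof. by apply: C_eq; rewrite ?(reJ,imJ,reD,imD) //; ring. Qed.
Lemma conjM z w : (z * w)^* = z^* * w^*. Proof. by apply: C_eq; rewrite ?(reJ,imJ,reM,imM) //; ring. Qed.
Lemma conjN z : (- z)^* = - z^*. Proof. by apply: C_eq; rewrite ?(reJ,imJ,reN,imN). Qed.
Lemma conj0 : (0 : R[i])^* = 0. Proof. by apply: C_eq; rewrite ?(reJ,imJ) //= oppr0. Qed.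
Lemma conj1 : (1 : R[i])^* = 1. Proof. by apply: C_eq; rewrite ?(reJ,imJ) //= oppr0. Qed.
Definition nsq z := re z ^+ 2 + im z ^+ 2.
Lemma nsq_ge0 z : 0 <= nsq z. Proof. rewrite /nsq; nra. Qed.
Lemma mulJ z : z * z^* = rc (nsq z).
Proof. by apply: C_eq; rewrite ?(reJ,imJ,reM,imM) /nsq /=; ring. Qed.
Lemma nsq0 z : nsq z = 0 -> z = 0.
Proof. rewrite /nsq => h; apply: C_eq => /=; nra. Qed.
End Ctool.


Lemma quad_R (R : realType) (P Q S : R) : 0 <= P -> 0 <= Q -> 0 <= S ->
  (forall s, 0 <= P - 2 * s * Q + s ^+ 2 * Q * S) -> Q <= P * S.
Proof.
move=> hP hQ hS h.
have [S0|Spos] := eqVneq S 0.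
  subst S; have [Q0|Qpos] := eqVneq Q 0; first by rewrite Q0 mulr0.
  have Qp : 0 < Q by rewrite lt_def Qpos hQ.
  have := h ((P + 1) / (2 * Q)).
  have -> : 2 * ((P + 1) / (2 * Q)) * Q = P + 1 by field; rewrite Qpos.
  lra.
have Sp : 0 < S by rewrite lt_def Spos hS.
have := h (S^-1).
have -> : P - 2 * S^-1 * Q + S^-1 ^+ 2 * Q * S = P - Q / S by field.
rewrite subr_ge0 ler_pdivrMr //.
Qed.

Section Sesq.
Variables (R : realType) (H : lmodType R[i]).
Local Notation rc := (real_complex R).
Local Notation re := (@complex.Re R).
Local Notation im := (@complex.Im R).
Implicit Types (D : set H) (f : H -> H -> R[i]).

Definition sesq D f : Prop :=
  [/\ linear_subspace D,
      (forall (a : R[i]) x y z, D x -> D y -> D z -> f (a *: x + y) z = a * f x z + f y z) &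
      (forall (a : R[i]) x y z, D x -> D y -> D z -> f z (a *: x + y) = a^* * f z x + f z y)].

Variables (D : set H) (f : H -> H -> R[i]) (hf : sesq D f).

Lemma mem0 : D 0. Proof. by case: hf => [[]]. Qed.
Lemma memL a x y : D x -> D y -> D (a *: x + y). Proof. by case: hf => [[_ h]] *; apply: h. Qed.
Lemma memD x y : D x -> D y -> D (x + y). Proof. by move=> ??; rewrite -[x]scale1r; apply: memL. Qed.
Lemma memZ a x : D x -> D (a *: x). Proof. by move=> ?; rewrite -[_ *: _]addr0; apply: memL => //; apply: mem0. Qed.
Lemma memN x : D x -> D (- x). Proof. by move=> ?; rewrite -scaleN1r; apply: memZ. Qed.
Lemma memB x y : D x -> D y -> D (x - y). Proof. by move=> ??; apply: memD => //; apply: memN. Qed.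

Lemma fL a x y z : D x -> D y -> D z -> f (a *: x + y) z = a * f x z + f y z.
Proof. by case: hf => _ h _; apply: h. Qed.
Lemma fR a x y z : D x -> D y -> D z -> f z (a *: x + y) = a^* * f z x + f z y.
Proof. by case: hf => _ _ h; apply: h. Qed.
Lemma f0l z : D z -> f 0 z = 0.
Proof.
move=> hz; have := fL 1 mem0 mem0 hz; rewrite scale1r addr0 mul1r => e.
by apply: (addrI (f 0 z)); rewrite addr0 -e.
Qed.
Lemma f0r z : D z -> f z 0 = 0.
Proof.
move=> hz; have := fR 1 mem0 mem0 hz; rewrite scale1r addr0 conj1 mul1r => e.
by apply: (addrI (f z 0)); rewrite addr0 -e.
Qed.
Lemma fDl x y z : D x -> D y -> D z -> f (x + y) z = f x z + f y z.
Proof. by move=> *; rewrite -{1}[x]scale1r fL // mul1r. Qed.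
Lemma fDr x y z : D x -> D y -> D z -> f z (x + y) = f z x + f z y.
Proof. by move=> *; rewrite -{1}[x]scale1r fR // conj1 mul1r. Qed.
Lemma fZl a x z : D x -> D z -> f (a *: x) z = a * f x z.
Proof. by move=> *; rewrite -[_ *: _]addr0 fL ?f0l ?addr0 //; apply: mem0. Qed.
Lemma fZr a x z : D x -> D z -> f z (a *: x) = a^* * f z x.
Proof. by move=> *; rewrite -[_ *: _]addr0 fR ?f0r ?addr0 //; apply: mem0. Qed.
Lemma fNl x z : D x -> D z -> f (- x) z = - f x z.
Proof. by move=> *; rewrite -scaleN1r fZl // mulN1r. Qed.
Lemma fNr x z : D x -> D z -> f z (- x) = - f z x.
Proof. by move=> *; rewrite -scaleN1r fZr // conjN conj1 mulN1r. Qed.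
Lemma fBl x y z : D x -> D y -> D z -> f (x - y) z = f x z - f y z.
Proof. by move=> *; rewrite fDl ?fNl //; apply: memN. Qed.
Lemma fBr x y z : D x -> D y -> D z -> f z (x - y) = f z x - f z y.
Proof. by move=> *; rewrite fDr ?fNr //; apply: memN. Qed.

Hypothesis fpos : forall x, D x -> 0 <= f x x.

Lemma f_herm x y : D x -> D y -> f y x = (f x y)^*.
Proof.
move=> hx hy.
have h1 := fpos (memD hx hy).
have h2 := fpos (memL (Complex 0 1) hx hy).
have hxy := memD hx hy; have hixy := memL (Complex 0 1) hx hy.
rewrite fDl // fDr // fDr // in h1.
rewrite fL // fR // fR // in h2.
have i1 := ge0_im h1; have i2 := ge0_im h2.
have ix := ge0_im (fpos hx); have iy := ge0_im (fpos hy).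
move: i1 i2; rewrite !(imD, imM, reM, reD, reJ, imJ) /= ix iy => i1 i2.
apply: C_eq; rewrite ?(reJ, imJ); lra.
Qed.

Lemma f_real x : D x -> f x x = rc (re (f x x)).
Proof. by move=> hx; apply: ge0_rc; apply: fpos. Qed.

Lemma f_CS x y : D x -> D y -> nsq (f x y) <= re (f x x) * re (f y y).
Proof.
move=> hx hy; set a := f x y.
have hw : D (a *: y) by apply: memZ.
apply: quad_R; [exact: ge0_re (fpos hx)|exact: nsq_ge0|exact: ge0_re (fpos hy)|].
move=> s.
have hv : D ((- rc s) *: (a *: y) + x) by apply: memL.
have := ge0_re (fpos hv).
rewrite fL ?fR // !fZl // !fZr // (f_herm hx hy) -/a.

have ix := ge0_im (fpos hx); have iy := ge0_im (fpos hy).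
rewrite !(imD, imM, reM, reD, reJ, imJ, reN, imN) /= /nsq.
move=> h; lra.
Qed.

End Sesq.


Section Hil.
Variables (R : realType) (H : lmodType R[i]) (ip : H -> H -> R[i]).
Hypothesis ipP : inner_product ip.
Local Notation rc := (real_complex R).
Local Notation re := (@complex.Re R).
Local Notation im := (@complex.Im R).

Lemma linT : linear_subspace (@setT H). Proof. by []. Qed.

Lemma ip_sesq : sesq setT ip.
Proof.
case: ipP => hl hs _ _; split.
- exact: linT.
- by move=> a x y z _ _ _; apply: hl.
- by move=> a x y z _ _ _; rewrite hs hl conjD conjM -!hs.
Qed.

Lemma ip_pos x : setT x -> 0 <= ip x x. Proof. by case: ipP => _ _ h _ _; apply: h. Qed.
Lemma ip_pos' x : 0 <= ip x x. Proof. exact: ip_pos. Qed.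
Lemma ip_def x : ip x x = 0 -> x = 0. Proof. by case: ipP => _ _ _; apply. Qed.
Lemma ip_herm x y : ip y x = (ip x y)^*. Proof. by case: ipP => _ h _ _; apply: h. Qed.

Definition n2 x := re (ip x x).
Lemma n2_ge0 x : 0 <= n2 x. Proof. exact: ge0_re (ip_pos' x). Qed.
Lemma ip_n2 x : ip x x = rc (n2 x). Proof. exact: ge0_rc (ip_pos' x). Qed.
Lemma n2_eq0 x : n2 x = 0 -> x = 0.
Proof. by move=> h; apply: ip_def; rewrite ip_n2 h. Qed.

Lemma ipCS x y : nsq (ip x y) <= n2 x * n2 y.
Proof. exact: (f_CS ip_sesq ip_pos). Qed.

Lemma ipDl x y z : ip (x + y) z = ip x z + ip y z. Proof. exact: (fDl ip_sesq). Qed.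
Lemma ipDr x y z : ip z (x + y) = ip z x + ip z y. Proof. exact: (fDr ip_sesq). Qed.
Lemma ipBl x y z : ip (x - y) z = ip x z - ip y z. Proof. exact: (fBl ip_sesq). Qed.
Lemma ipBr x y z : ip z (x - y) = ip z x - ip z y. Proof. exact: (fBr ip_sesq). Qed.
Lemma ipZl a x z : ip (a *: x) z = a * ip x z. Proof. exact: (fZl ip_sesq). Qed.
Lemma ipZr a x z : ip z (a *: x) = a^* * ip z x. Proof. exact: (fZr ip_sesq). Qed.
Lemma ip0l z : ip 0 z = 0. Proof. exact: (f0l ip_sesq). Qed.
Lemma ip0r z : ip z 0 = 0. Proof. exact: (f0r ip_sesq). Qed.

Lemma n2B x y : n2 (x - y) = n2 x - 2 * re (ip x y) + n2 y.
Proof.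
rewrite /n2 ipBl !ipBr (ip_herm x y) !(reB, reJ); lra.
Qed.
Lemma n2D x y : n2 (x + y) = n2 x + 2 * re (ip x y) + n2 y.
Proof.
rewrite /n2 ipDl !ipDr (ip_herm x y) !(reD, reJ); lra.
Qed.
Lemma n2B_le x y : n2 (x - y) <= 2 * n2 x + 2 * n2 y.
Proof.
have := n2_ge0 (x + y); rewrite n2B n2D => h.
have := n2_ge0 x; have := n2_ge0 y; lra.
Qed.

Lemma re_le_nsq z : re z ^+ 2 <= nsq z.
Proof. rewrite /nsq; nra. Qed.

Lemma dense_R (D : set H) : dense ip D ->
  forall x (d : R), 0 < d -> exists2 v, D v & n2 (x - v) < d.
Proof.
move=> hD x d hd; have [|v hv h] := hD x (rc d); first by rewrite rc_lt.
by exists v => //; move: (lt_re h).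
Qed.

Lemma nondeg (D : set H) (w : H) : dense ip D ->
  (forall v, D v -> ip w v = 0) -> w = 0.
Proof.
move=> hD hw; apply: n2_eq0.
have hb := n2_ge0 w.
have [->//|bne] := eqVneq (n2 w) 0.
have bp : 0 < n2 w by rewrite lt_def bne hb.
have [v hv hlt] := dense_R hD w (divr_gt0 bp (ltr0Sn _ 1)).
have e : ip w w = ip w (w - v) by rewrite ipBr (hw v hv) subr0.
have := ipCS w (w - v); rewrite -e ip_n2 /nsq /= expr0n /= addr0 => h.
have := n2_ge0 (w - v); nra.
Qed.

Lemma dense_sup (D : set H) (b : H) (K : R) : dense ip D -> 0 <= K ->
  (forall v, D v -> nsq (ip b v) <= K * n2 v) -> n2 b <= 12 * K.
Proof.
move=> hD hK hb.
have hb0 := n2_ge0 b.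
have [->|bne] := eqVneq (n2 b) 0; first by lra.
have bp : 0 < n2 b by rewrite lt_def bne hb0.
have [v hv hlt] := dense_R hD b (divr_gt0 bp (ltr0Sn _ 3)).
set d := b - v.
have ev : v = b - d by rewrite /d opprB addrC subrK.
have h1 := ipCS b d.
have h2 := re_le_nsq (ip b d).
have hd0 := n2_ge0 d.
have r1 : re (ip b d) <= n2 b / 2.
  have : re (ip b d) ^+ 2 <= (n2 b / 2) ^+ 2 by nra.
  move=> hh; have := n2_ge0 b; nra.
have e2 : re (ip b v) = n2 b - re (ip b d) by rewrite ev ipBr reB.
have h3 := re_le_nsq (ip b v).
have h4 := hb v hv.
have h5 : n2 v <= 2 * n2 b + 2 * n2 d by rewrite ev; apply: n2B_le.
have h6 : n2 b ^+ 2 / 4 <= nsq (ip b v).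
  apply: le_trans h3; rewrite e2; nra.
have h7 : n2 b ^+ 2 / 4 <= K * (2 * n2 b + 2 * (n2 b / 4)).
  apply: (le_trans h6); apply: (le_trans h4); apply: ler_wpM2l => //; lra.
nra.
Qed.

End Hil.


Section Rep.
Variables (R : realType) (H : lmodType R[i]) (ip : H -> H -> R[i]).
Hypothesis ipP : inner_product ip.
Local Notation rc := (real_complex R).
Local Notation re := (@complex.Re R).
Local Notation im := (@complex.Im R).
Local Notation n2 := (n2 ip).

Variables (D : set H) (t : H -> H -> R[i]) (T : H -> H).
Hypotheses (hD : dense ip D) (ht : sesq D t) (tpos : forall x, D x -> 0 <= t x x)
  (hrep : forall u v, D u -> D v -> t u v = ip (T u) v).

Lemma B1 M : (forall u, D u -> ip u u = 1 -> ip (T u) (T u) <= M) ->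
  forall u, D u -> ip u u = 1 -> t u u <= rc ((re M + 1) / 2).
Proof.
move=> hM u hu h1.
have hn : n2 u = 1 by rewrite /n2 h1.
have hT := le_re (hM u hu h1).
have := n2_ge0 ipP (T u - u); rewrite (n2B ipP) hn -(hrep hu hu) => hh.
rewrite leC /=; last exact: ge0_im (tpos hu).
have : n2 (T u) <= re M by [].
lra.
Qed.

Lemma scale_bound M : (forall u, D u -> ip u u = 1 -> t u u <= M) ->
  forall v, D v -> re (t v v) <= (re M ^+ 2 + 1) * n2 v.
Proof.
move=> hM v hv.
have hM1 : re M <= re M ^+ 2 + 1 by nra.
have r0 := n2_ge0 ipP v.
have [e0|rne] := eqVneq (n2 v) 0.
  rewrite e0 mulr0 (n2_eq0 ipP e0) (f0l ht) ?re0 //; exact: (mem0 ht).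
have rp : 0 < n2 v by rewrite lt_def rne r0.
set s := Num.sqrt (n2 v).
have sp : 0 < s by rewrite sqrtr_gt0.
have s2 : s ^+ 2 = n2 v by rewrite sqr_sqrtr.
set c := rc s^-1.
have cc : c^* * c = rc (n2 v)^-1.
  by rewrite rcJ -rcM -s2 -expr2 exprVn.
have hu : D (c *: v) by apply: (memZ ht).
have h1 : ip (c *: v) (c *: v) = 1.
  rewrite (ipZl ipP) (ipZr ipP) mulrA [c * _]mulrC cc (ip_n2 ipP) -rcM mulVf //.
have := le_re (hM _ hu h1).
rewrite (fZl ht) // (fZr ht) // mulrA [c * _]mulrC cc reM /= mul0r subr0.
move=> h.
have h2 : re (t v v) <= re M * n2 v.
  by have := ler_wpM2r r0 h; rewrite mulrAC mulVf // mul1r.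
by apply: (le_trans h2); apply: ler_wpM2r.
Qed.

Lemma B2 M : (forall u, D u -> ip u u = 1 -> t u u <= M) ->
  forall u, D u -> ip u u = 1 -> ip (T u) (T u) <= rc (12 * (re M ^+ 2 + 1) ^+ 2).
Proof.
move=> hM u hu h1.
have hn : n2 u = 1 by rewrite /n2 h1.
set M0 := re M ^+ 2 + 1.
have M0p : 0 <= M0 by rewrite /M0; nra.
have hsb := scale_bound hM.
have : n2 (T u) <= 12 * (M0 ^+ 2 * n2 u).
  apply: (dense_sup ipP hD); first by rewrite mulr_ge0 ?n2_ge0 ?sqr_ge0.
  move=> v hv; rewrite -(hrep hu hv).
  apply: (le_trans (f_CS ht tpos hu hv)).
  have a1 := hsb u hu; have a2 := hsb v hv.
  have b1 := ge0_re (tpos hu); have b2 := ge0_re (tpos hv).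
  have := n2_ge0 ipP u; have := n2_ge0 ipP v.
  rewrite -/M0 in a1 a2 *.
  move=> c1 c2.
  have := ler_pM b1 b2 a1 a2; move=> h; apply: (le_trans h).
  rewrite /M0; nra.
rewrite hn mulr1 (ip_n2 ipP) rc_le //.
Qed.

End Rep.


Lemma arch (R : realType) (e : R) : 0 < e ->
  exists N : nat, forall n : nat, (N <= n)%N -> (n.+1%:R)^-1 < e.
Proof.
move=> ep; exists (Num.Def.archi_bound e^-1) => n hn.
have ep' : 0 <= e^-1 by rewrite invr_ge0 ltW.
have h1 := archi_boundP ep'.
have h2 : (Num.Def.archi_bound e^-1)%:R <= n.+1%:R :> R.
  by rewrite ler_nat; apply: leqW.
have ee : e * e^-1 = 1 by rewrite mulfV // gt_eqF.
have np : 0 < n.+1%:R :> R by rewrite ltr0Sn.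
rewrite -[(n.+1%:R)^-1]mul1r ltr_pdivrMr //.
have : e^-1 < n.+1%:R by apply: lt_le_trans h2.
nra.
Qed.

Lemma nsq_eps (R : realType) (z : R[i]) :
  (forall eps : R, 0 < eps -> nsq z <= eps) -> z = 0.
Proof.
move=> h; apply: nsq0.
have h0 := nsq_ge0 z.
have [//|ne] := eqVneq (nsq z) 0.
have p : 0 < nsq z by rewrite lt_def ne h0.
have := h (nsq z / 2) (divr_gt0 p (ltr0Sn _ 1)); lra.
Qed.

Lemma nsqD_le (R : realType) (a b : R[i]) : nsq (a + b) <= 2 * nsq a + 2 * nsq b.
Proof.
rewrite /nsq reD imD.
have := sqr_ge0 (complex.Re a - complex.Re b); have := sqr_ge0 (complex.Im a - complex.Im b); nra.
Qed.

Lemma sesq_triv (R : realType) (H : lmodType R[i]) (D : set H) :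
  linear_subspace D -> sesq D (fun _ _ => 0 : R[i]).
Proof. by move=> h; split => // *; rewrite mulr0 addr0. Qed.

Section Riesz.
Variables (R : realType) (H : lmodType R[i]) (ip : H -> H -> R[i]).
Hypothesis ipP : inner_product ip.
Hypothesis hC : hilbert_complete ip.
Local Notation rc := (real_complex R).
Local Notation re := (@complex.Re R).
Local Notation im := (@complex.Im R).
Local Notation n2 := (n2 ip).

Variables (D : set H) (y : H -> H -> R[i]) (B0 : H -> H) (M0 : R).
Hypotheses (hD : dense ip D) (hDl : linear_subspace D) (hy : sesq setT y)
  (ypos : forall x, 0 <= y x x) (M0p : 0 <= M0)
  (ybd : forall v, re (y v v) <= M0 * n2 v)
  (B0lin : forall a x z, D x -> D z -> B0 (a *: x + z) = a *: B0 x + B0 z)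
  (rep0 : forall u v, D u -> D v -> y u v = ip (B0 u) v).

Let ypos' x : setT x -> 0 <= y x x. Proof. by move=> _; apply: ypos. Qed.

Lemma yCS u v : nsq (y u v) <= M0 * n2 u * re (y v v).
Proof.
apply: (le_trans (f_CS hy ypos' I I)).
apply: ler_wpM2r; [exact: ge0_re (ypos v)|exact: ybd].
Qed.

Lemma B0B x z : D x -> D z -> B0 (x - z) = B0 x - B0 z.
Proof.
move=> hx hz; rewrite addrC -scaleN1r B0lin // scaleN1r addrC //.
Qed.

Lemma bound0 w : D w -> n2 (B0 w) <= 12 * (M0 ^+ 2 * n2 w).
Proof.
move=> hw; apply: (dense_sup ipP hD); first by rewrite mulr_ge0 ?sqr_ge0 ?n2_ge0.
move=> v hv; rewrite -rep0 //.
apply: (le_trans (yCS w v)).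
apply: (le_trans (ler_wpM2l (mulr_ge0 M0p (n2_ge0 ipP w)) (ybd v))).
have := mulr_ge0 (mulr_ge0 (sqr_ge0 M0) (n2_ge0 ipP w)) (n2_ge0 ipP v).
rewrite expr2; nra.
Qed.

Lemma lt_rcC (r : R) (e : R[i]) : 0 < e -> r < re e -> rc r < e.
Proof. by move=> ep h; rewrite ltC //= -(lt_im ep). Qed.

Lemma riesz_pt u : exists l, forall v, y u v = ip l v.
Proof.
have hs' : forall n : nat, exists w, D w /\ n2 (u - w) < (n.+1%:R)^-1.
  move=> n; have np : 0 < (n.+1%:R : R)^-1 by rewrite invr_gt0 ltr0Sn.
  have [w hw h] := dense_R hD u np.
  by exists w.
have [s hs] := choice hs'.
pose K := 12 * M0 ^+ 2.
have Kp : 0 <= K by rewrite /K mulr_ge0 ?sqr_ge0.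
have cauchy : forall e : R[i], 0 < e -> exists N : nat, forall m n : nat,
    (N <= m)%N -> (N <= n)%N -> dist2 ip (B0 (s m)) (B0 (s n)) < e.
  move=> e ep; have rep := lt_re ep; rewrite re0 in rep.
  have dp : 0 < re e / (4 * K + 1) by apply: divr_gt0 => //; lra.
  have [N hN] := arch dp.
  exists N => m n hm hn.
  rewrite /dist2 -B0B; [|exact: (hs m).1|exact: (hs n).1].
  rewrite ip_n2 //; apply: lt_rcC => //.
  have hb := bound0 (memB (sesq_triv hDl) (hs m).1 (hs n).1).
  have e1 : s m - s n = (u - s n) - (u - s m).
    by rewrite opprD opprK addrACA subrr add0r addrC.
  have hle := n2B_le ipP (u - s n) (u - s m); rewrite -e1 in hle.
  have a1 := hN m hm; have a2 := hN n hn.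
  have b1 := (hs m).2; have b2 := (hs n).2.
  have c1 := n2_ge0 ipP (u - s m); have c2 := n2_ge0 ipP (u - s n).
  have : n2 (s m - s n) < 4 * (re e / (4 * K + 1)).
  move: hle a1 a2 b1 b2; set d := re e / _; set p1 := n2 (s m - s n); set q1 := n2 (u - s n); set q2 := n2 (u - s m); set r1 := m.+1%:R^-1; set r2 := n.+1%:R^-1.
move=> *; lra.
  move=> hh.
  have : K * n2 (s m - s n) <= K * (4 * (re e / (4 * K + 1))).
    by apply: ler_wpM2l => //; apply: ltW.
  have : K * (4 * (re e / (4 * K + 1))) < re e.
    rewrite mulrA mulrA ltr_pdivrMr; last by lra.
    nra.
  rewrite /K in hb *; lra.
have [l hl] := hC cauchy.
exists l.
have hD0 : forall v, D v -> y u v = ip l v.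
  move=> v hv; apply/eqP; rewrite -subr_eq0; apply/eqP; apply: nsq_eps => eps epsp.
  set Yv := re (y v v); set Nv := n2 v.
  have Yv0 : 0 <= Yv by apply: ge0_re.
  have Nv0 : 0 <= Nv by apply: n2_ge0.
  set A := M0 * Yv + Nv.
  have A0 : 0 <= A by rewrite /A addr_ge0 ?mulr_ge0.
  have dp : 0 < eps / (4 * A + 1) by apply: divr_gt0 => //; lra.
  set dl := eps / (4 * A + 1).
  have [N1 hN1] := arch dp.
  have dlc : 0 < rc dl by rewrite ltC.
  have [N2 hN2] := hl (rc dl) dlc.
  pose n := (N1 + N2)%N.
  have b1 := (hs n).2.
  have a1 := hN1 n (leq_addr _ _).
  have c1 := hN2 n (leq_addl _ _).
  rewrite /dist2 ip_n2 // rc_lt in c1.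
  have e1 : y u v - ip l v = y (u - s n) v + ip (B0 (s n) - l) v.
    rewrite (fBl hy (x:=u) (y:=s n) (z:=v) I I I) (ipBl ipP) -rep0 //; [ring | exact: (hs n).1].
  rewrite e1; apply: (le_trans (nsqD_le _ _)).
  have h1 := yCS (u - s n) v; have h2 := ipCS ipP (B0 (s n) - l) v.
  rewrite -/Yv -/Nv in h1 h2.
  have d1 : n2 (u - s n) <= dl by apply: ltW; apply: lt_trans b1 a1.
  have g1 : M0 * n2 (u - s n) * Yv <= M0 * dl * Yv.
    by apply: ler_wpM2r => //; apply: ler_wpM2l.
  have g2 : n2 (B0 (s n) - l) * Nv <= dl * Nv by apply: ler_wpM2r => //; apply: ltW.
  have e2 : 2 * (M0 * dl * Yv) + 2 * (dl * Nv) = 2 * (dl * A) by rewrite /A; ring.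
  have e3 : dl * (4 * A + 1) = eps by rewrite /dl; field; lra.
  have g3 : 0 <= dl * A by rewrite mulr_ge0 // ltW.
  have dl0 : 0 <= dl by apply: ltW.
  move: e2 e3 g3 g1 g2 h1 h2 dl0.
  set P1 := M0 * dl * Yv; set P2 := dl * Nv; set P3 := dl * A.
  move=> e2 e3 g3 g1 g2 h1 h2 dl0.
  have e4 : eps = 4 * P3 + dl by rewrite -e3 /P3; ring.
  lra.
move=> v; apply/eqP; rewrite -subr_eq0; apply/eqP; apply: nsq_eps => eps epsp.
set Yu := re (y u u).
have Yu0 : 0 <= Yu by apply: ge0_re.
set K' := 2 * (Yu * M0 + n2 l).
have K0 : 0 <= K'.
  by rewrite /K' mulr_ge0 // addr_ge0 ?mulr_ge0 // (n2_ge0 ipP).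
have dp : 0 < eps / (K' + 1) by apply: divr_gt0 => //; lra.
set dl := eps / (K' + 1).
have [v' hv' hlt] := dense_R hD v dp.
set w := v - v'.
have e1 : y u v - ip l v = y u w + - ip l w.
  by rewrite (fBr hy (x:=v) (y:=v') (z:=u) I I I) (ipBr ipP) (hD0 v' hv'); ring.
rewrite e1; apply: (le_trans (nsqD_le _ _)).
have h1 : nsq (y u w) <= Yu * (M0 * n2 w).
  apply: (le_trans (f_CS hy ypos' I I)); apply: ler_wpM2l => //.
have h2 := ipCS ipP l w.
have hN : nsq (- ip l w) = nsq (ip l w) by rewrite /nsq reN imN !sqrrN.
rewrite hN.
have w0 := n2_ge0 ipP w.
have e3 : dl * (K' + 1) = eps by rewrite /dl; field; lra.
have g : K' * n2 w <= K' * dl by apply: ler_wpM2l => //; apply: ltW.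
have e4 : 2 * (Yu * (M0 * n2 w)) + 2 * (n2 l * n2 w) = K' * n2 w by rewrite /K'; ring.
have dl0 : 0 <= dl by apply: ltW.
move: e3 g e4 h1 h2.
set P1 := Yu * (M0 * n2 w); set P2 := n2 l * n2 w; set P3 := K' * n2 w; set P4 := K' * dl.
move=> e3 g e4 h1 h2.
have e5 : eps = P4 + dl by rewrite -e3 /P4; ring.
lra.
Qed.

Lemma riesz : exists B : H -> H, forall u v, y u v = ip (B u) v.
Proof.
have [B hB] := choice riesz_pt.
by exists B.
Qed.

End Riesz.


Section Main.
Variables (R : realType) (H : lmodType R[i]) (ip : H -> H -> R[i]).
Hypothesis ipP : inner_product ip.
Local Notation rc := (real_complex R).
Local Notation re := (@complex.Re R).
Local Notation im := (@complex.Im R).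
Local Notation n2 := (n2 ip).
Local Notation form := (@Defs.form R H).
Local Notation oper := (@Defs.oper R H).

Definition rep (t : form) (A : oper) :=
  odom A = fdom t /\ forall x y, fdom t x -> fdom t y -> fval t x y = ip (oval A x) y.

Lemma Vf_sesq t : Vf ip t -> sesq (fdom t) (fval t).
Proof. by case=> [[hl _] _ [h1 h2 _ _]]; split. Qed.
Lemma Vf_pos t : Vf ip t -> forall x, fdom t x -> 0 <= fval t x x.
Proof. by case=> _ _ [_ _ h _]. Qed.
Lemma Vf_dense t : Vf ip t -> dense ip (fdom t).
Proof. by case=> [[_ h] _ _]. Qed.
Lemma Vf_lin t : Vf ip t -> linear_subspace (fdom t).
Proof. by case=> [[h _] _ _]. Qed.
Lemma Vf_norm t : Vf ip t -> forall x y, ~ (fdom t x /\ fdom t y) -> fval t x y = 0.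
Proof. by case. Qed.
Lemma Vf_bnd t : Vf ip t -> form_bounded ip t -> fdom t = setT.
Proof. by case=> _ _ [_ _ _ h]. Qed.

Lemma Vop_lin A : Vop ip A -> forall (a : R[i]) x y, odom A x -> odom A y ->
          oval A (a *: x + y) = a *: oval A x + oval A y.
Proof. by case. Qed.
Lemma Vop_dense A : Vop ip A -> dense ip (odom A).
Proof. by case=> [[_ h]]. Qed.
Lemma Vop_ls A : Vop ip A -> linear_subspace (odom A).
Proof. by case=> [[h _]]. Qed.
Lemma Vop_norm A : Vop ip A -> forall x, ~ odom A x -> oval A x = 0.
Proof. by case. Qed.
Lemma Vop_pos A : Vop ip A -> forall x, odom A x -> 0 <= ip (oval A x) x.
Proof. by case. Qed.
Lemma Vop_bnd A : Vop ip A -> oper_bounded ip A -> odom A = setT.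
Proof. by case. Qed.

Lemma Vop_sesq A : Vop ip A -> sesq (odom A) (fun x y => ip (oval A x) y).
Proof.
move=> hA; split; first exact: Vop_ls hA.
- by move=> a x y z hx hy hz; rewrite Vop_lin // (ipDl ipP) (ipZl ipP).
- by move=> a x y z hx hy hz; rewrite (ipDr ipP) (ipZr ipP).
Qed.

Lemma uniq_oper A A' : Vop ip A -> Vop ip A' -> odom A = odom A' ->
  (forall u v, odom A u -> odom A v -> ip (oval A u) v = ip (oval A' u) v) -> A = A'.
Proof.
case: A => D f; case: A' => D' f' hA hA' /= eD h; subst D'.
congr Oper; apply: funext => u.
have [hu|hu] := pselect (D u); last by move: (Vop_norm hA hu) (Vop_norm hA' hu) => /= -> ->.
apply/eqP; rewrite -subr_eq0; apply/eqP.
apply: (nondeg ipP (Vop_dense hA)) => v hv /=.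
by rewrite (ipBl ipP) h // subrr.
Qed.

Lemma form_ext t s : Vf ip t -> Vf ip s -> fdom t = fdom s ->
  (forall u v, fdom t u -> fdom t v -> fval t u v = fval s u v) -> t = s.
Proof.
case: t => D f; case: s => D' f' ht hs /= eD h; subst D'.
congr Form; apply: funext => u; apply: funext => v.
have [huv|huv] := pselect (D u /\ D v); first by apply: h; case: huv.
by move: (Vf_norm ht huv) (Vf_norm hs huv) => /= -> ->.
Qed.

Lemma bnd_of_oper t A : Vf ip t -> rep t A -> oper_bounded ip A -> form_bounded ip t.
Proof.
move=> ht [eD hr] [M hM]; exists (rc ((re M + 1) / 2)).
apply: (B1 ipP (T := oval A) (Vf_pos ht) hr) => u hu h1.
by apply: hM => //; rewrite eD.
Qed.

Lemma bnd_of_form t A : Vf ip t -> rep t A -> form_bounded ip t -> oper_bounded ip A.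
Proof.
move=> ht [eD hr] [M hM]; exists (rc (12 * (re M ^+ 2 + 1) ^+ 2)).
move=> u; rewrite eD => hu h1.
exact: (B2 ipP (Vf_dense ht) (Vf_sesq ht) (Vf_pos ht) hr hM hu h1).
Qed.


Definition cond (x y : form) := form_bounded ip x \/ form_bounded ip y \/ fdom x = fdom y.

Lemma cond_sym x y : cond x y -> cond y x.
Proof. by case=> [h|[h|h]]; [right; left|left|right; right]. Qed.

Lemma cond_dom x y : Vf ip x -> Vf ip y -> cond x y ->
  (fdom x `&` fdom y = fdom y /\ fdom y `<=` fdom x) \/
  (fdom y `&` fdom x = fdom x /\ fdom x `<=` fdom y).
Proof.
move=> hx hy [h|[h|h]].
- by left; rewrite (Vf_bnd hx h) setTI; split.
- by right; rewrite (Vf_bnd hy h) setTI; split.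
- by left; rewrite h setIid; split.
Qed.

Lemma form_sum_comm (x y : form) : form_sum x y = form_sum y x.
Proof.
rewrite /form_sum setIC; congr Form; apply: funext => u; apply: funext => v.
by rewrite addrC.
Qed.

Lemma oper_sum_comm (A B : oper) : oper_sum A B = oper_sum B A.
Proof.
rewrite /oper_sum setIC; congr Oper; apply: funext => u.
by rewrite addrC.
Qed.

Lemma sum_val (x y : form) u v : fdom x u -> fdom y u -> fdom x v -> fdom y v ->
  fval (form_sum x y) u v = fval x u v + fval y u v.
Proof. by move=> *; rewrite /form_sum /= asboolT. Qed.

Lemma Vf_sum_aux x y : Vf ip x -> Vf ip y ->
  fdom x `&` fdom y = fdom y -> fdom y `<=` fdom x -> Vf ip (form_sum x y).
Proof.
move=> hx hy eI sub.
have sx := Vf_sesq hx; have sy := Vf_sesq hy.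
split.
- by rewrite /form_sum /= eI; case: hy.
- by move=> u v h; rewrite /form_sum /= asboolF.
split.
- move=> a u v w [hxu hyu] [hxv hyv] [hxw hyw].
  have hxa := memL sx a hxu hxv; have hya := memL sy a hyu hyv.
  rewrite !sum_val // (fL sx) // (fL sy) //; ring.
- move=> a u v w [hxu hyu] [hxv hyv] [hxw hyw].
  have hxa := memL sx a hxu hxv; have hya := memL sy a hyu hyv.
  rewrite !sum_val // (fR sx) // (fR sy) //; ring.
- move=> u [hxu hyu]; rewrite sum_val //.
  by rewrite addr_ge0 // ?(Vf_pos hx) ?(Vf_pos hy).
- move=> [M hM]; rewrite /form_sum /= eI; apply: (Vf_bnd hy).
  exists M => u hu h1.
  have hxu := sub u hu.
  apply: le_trans (hM u (conj hxu hu) h1).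
  by rewrite sum_val // -subr_ge0 addrK (Vf_pos hx).
Qed.

Lemma osum_val (A B : oper) u : odom A u -> odom B u ->
  oval (oper_sum A B) u = oval A u + oval B u.
Proof. by move=> *; rewrite /oper_sum /= asboolT. Qed.

Lemma sum_aux x y A B : Vf ip x -> Vf ip y -> Vop ip A -> Vop ip B -> rep x A -> rep y B ->
  fdom x `&` fdom y = fdom y -> fdom y `<=` fdom x ->
  [/\ Vf ip (form_sum x y), Vop ip (oper_sum A B) & rep (form_sum x y) (oper_sum A B)].
Proof.
move=> hx hy hA hB [eA rA] [eB rB] eI sub.
have hs := Vf_sum_aux hx hy eI sub.
have hr : rep (form_sum x y) (oper_sum A B).
  split; first by rewrite /oper_sum /form_sum /= eA eB.
  move=> u v [hxu hyu] [hxv hyv].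
  rewrite sum_val // osum_val ?eA ?eB // (ipDl ipP) rA // rB //.
split => //.
have sA := Vop_sesq hA; have sB := Vop_sesq hB.
split.
- by rewrite /oper_sum /= eA eB eI; case: hy.
- by move=> u h; rewrite /oper_sum /= asboolF.
- move=> a u v [hAu hBu] [hAv hBv].
  have hAa := memL sA a hAu hAv; have hBa := memL sB a hBu hBv.
  by rewrite !osum_val // !(Vop_lin hA) // !(Vop_lin hB) // scalerDr addrACA.
- move=> u [hAu hBu]; rewrite osum_val // (ipDl ipP).
  by rewrite addr_ge0 // (Vop_pos hA, Vop_pos hB).
- move=> hb; have := Vf_bnd hs (bnd_of_oper hs hr hb).
  by rewrite /form_sum /oper_sum /= eA eB.
Qed.

Lemma sum_gen x y A B : Vf ip x -> Vf ip y -> Vop ip A -> Vop ip B -> rep x A -> rep y B ->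
  cond x y ->
  [/\ Vf ip (form_sum x y), Vop ip (oper_sum A B) & rep (form_sum x y) (oper_sum A B)].
Proof.
move=> hx hy hA hB rx ry hc.
have [[eI sub]|[eI sub]] := cond_dom hx hy hc; first exact: sum_aux.
by rewrite form_sum_comm oper_sum_comm; apply: sum_aux.
Qed.

Lemma dense_setT : dense_subspace ip (@setT H).
Proof.
split; first exact: linT.
move=> x e he; exists x => //.
by rewrite /dist2 subrr (ip0l ipP).
Qed.

Lemma diff_gen (hC : hilbert_complete ip) x y A C : Vf ip x -> Vf ip y -> Vop ip A -> Vop ip C ->
  rep x A -> rep (form_sum x y) C -> cond x y -> exists2 B, Vop ip B & rep y B.
Proof.
move=> hx hy hA hC' [eA rA] [eC rC] hc.
have sx := Vf_sesq hx; have sy := Vf_sesq hy.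
have key : forall u v, fdom x u -> fdom y u -> fdom x v -> fdom y v ->
    fval y u v = ip (oval C u - oval A u) v.
  move=> u v hxu hyu hxv hyv.
  have := rC u v (conj hxu hyu) (conj hxv hyv).
  rewrite sum_val // (ipBl ipP) -rA // => <-; ring.
have Clin : forall a u v, fdom x u -> fdom y u -> fdom x v -> fdom y v ->
    oval C (a *: u + v) - oval A (a *: u + v) =
    a *: (oval C u - oval A u) + (oval C v - oval A v).
  move=> a u v hxu hyu hxv hyv.
  rewrite (Vop_lin hC') ?eC //= (Vop_lin hA) ?eA //.
  by rewrite scalerBr opprD addrACA.
have [yb|ynb] := pselect (form_bounded ip y).
  have eDy := Vf_bnd hy yb.
  have [M hM] := yb.
  have sbd := scale_bound ipP sy hM.
  have sy' : sesq setT (fval y) by rewrite -eDy.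
  have ypos : forall u, 0 <= fval y u u by move=> u; apply: (Vf_pos hy); rewrite eDy.
  have [B hB] : exists B : H -> H, forall u v, fval y u v = ip (B u) v.
    apply: (riesz ipP hC (Vf_dense hx) (Vf_lin hx) sy' ypos
      (M0 := re M ^+ 2 + 1) (B0 := fun u => oval C u - oval A u)).
    - by rewrite addr_ge0 ?sqr_ge0.
    - by move=> v; apply: sbd; rewrite eDy.
    - by move=> a u v hu hv; apply: Clin; rewrite ?eDy.
    - by move=> u v hu hv; apply: key; rewrite ?eDy.
  exists (Oper setT B); last first.
    by split; [rewrite eDy | move=> u v _ _; apply: hB].
  split => //=.
  - exact: dense_setT.
  - move=> a u v _ _; apply/eqP; rewrite -subr_eq0; apply/eqP.
    apply: (nondeg ipP (dense_setT.2)) => w _.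
    rewrite (ipBl ipP) (ipDl ipP) (ipZl ipP) -!hB (fL sy') //; ring.
  - by move=> u _; rewrite -hB.
have [eI sub] : fdom x `&` fdom y = fdom y /\ fdom y `<=` fdom x.
  case: hc => [h|[//|h]].
    by rewrite (Vf_bnd hx h) setTI; split.
  by rewrite h setIid; split.
pose B := Oper (fdom y) (fun u => if `[< fdom y u >] then oval C u - oval A u else 0).
have rB : rep y B.
  split => // u v hu hv /=; rewrite asboolT // key //; exact: sub.
exists B => //.
split => //=.
- by case: hy.
- by move=> u hu; rewrite asboolF.
- move=> a u v hu hv; have hyu := memL sy a hu hv.
  rewrite !asboolT //; apply: Clin => //; exact: sub.
- by move=> u hu; rewrite asboolT // -key //; [apply: (Vf_pos hy)|apply: sub..].
- by move=> hb; apply: (Vf_bnd hy); apply: (bnd_of_oper hy rB).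
Qed.

Lemma Vop_zero : Vop ip (zero_oper H).
Proof.
split => //=.
- exact: dense_setT.
- by move=> a u v _ _; rewrite scaler0 addr0.
- by move=> u _; rewrite (ip0l ipP).
Qed.

Lemma Vf_zero : Vf ip (zero_form H).
Proof.
split => //=.
- exact: dense_setT.
- by split => //= *; rewrite ?mulr0 addr0.
Qed.

Lemma rep_zero : rep (zero_form H) (zero_oper H).
Proof. by split => //= u v _ _; rewrite (ip0l ipP). Qed.

Lemma Gf_zero : Gf ip (zero_form H).
Proof. split; [exact: Vf_zero | exists (zero_oper H); [exact: Vop_zero|exact: rep_zero]]. Qed.

Definition form_of (A : oper) : form :=
  Form (odom A) (fun u v => if `[< odom A u /\ odom A v >] then ip (oval A u) v else 0).

Lemma form_ofP A : Vop ip A -> Vf ip (form_of A) /\ rep (form_of A) A.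
Proof.
move=> hA; have sA := Vop_sesq hA.
have rA : rep (form_of A) A by split => //= u v hu hv; rewrite asboolT.
split => //.
split => //=.
- by case: hA.
- by move=> u v h; rewrite asboolF.
split => /=.
- move=> a u v w hu hv hw; have := memL sA a hu hv => hh.
  by rewrite !asboolT // (fL sA).
- move=> a u v w hu hv hw; have := memL sA a hu hv => hh.
  by rewrite !asboolT // (fR sA).
- by move=> u hu; rewrite asboolT //; apply: Vop_pos.
- move=> [M hM]; apply: (Vop_bnd hA).
  exists (rc (12 * (re M ^+ 2 + 1) ^+ 2)) => u hu h1.
  apply: (B2 ipP (Vop_dense hA) sA (Vop_pos hA) (t := fun x y => ip (oval A x) y) _ _ hu h1) => //.
  by move=> w hw h2; have := hM w hw h2; rewrite /= asboolT.
Qed.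

Definition phi (t : form) : oper :=
  match pselect (exists A, Vop ip A /\ rep t A) with
  | left e => proj1_sig (cid e)
  | right _ => zero_oper H
  end.

Lemma Gf_rep t : Gf ip t -> exists A, Vop ip A /\ rep t A.
Proof. by case=> _ [A hA hr]; exists A. Qed.

Lemma rep_Gf t A : Vf ip t -> Vop ip A -> rep t A -> Gf ip t.
Proof. by move=> ht hA hr; split => //; exists A. Qed.

Lemma phiP t : Gf ip t -> Vop ip (phi t) /\ rep t (phi t).
Proof.
move=> /Gf_rep he; rewrite /phi; case: pselect => [e|ne]; last by [].
exact: (proj2_sig (cid e)).
Qed.

Lemma phi_eq t A : Gf ip t -> Vop ip A -> rep t A -> phi t = A.
Proof.
move=> ht hA [eA rA]; have [hp [ep rp]] := phiP ht.
apply: uniq_oper => //; first by rewrite ep eA.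
by move=> u v; rewrite ep => hu hv; rewrite -rp // -rA.
Qed.

End Main.


Unset Implicit Arguments.
Theorem theorem4p14 (R : realType) (H : lmodType R[i]) (ip : H -> H -> R[i])
  (hH : hilbert_space ip) (hinf : infinite_dimensional H) :
  sub_GEA (Vf ip) (@form_oplus R H ip) (zero_form H) (Gf ip) /\
  GEA_isomorphic (Gf ip) (restrict_op (Gf ip) (@form_oplus R H ip)) (zero_form H)
                 (Vop ip) (@oper_oplusD R H ip) (zero_oper H).
Proof.
case: hH => ipP hC.
split.
  split; first by move=> t [].
    exact: Gf_zero.
  move=> x y z hx hy hz; rewrite /form_oplus; case: asboolP => // hc [<-] hQ.
  have hc' : cond ip x y := hc.
  case: hQ => [[gx gy]|[[gx gz]|[gy gz]]].
  - have [A [hA rA]] := Gf_rep gx; have [B [hB rB]] := Gf_rep gy.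
    have [hs hAB rAB] := sum_gen ipP hx hy hA hB rA rB hc'.
    by split => //; apply: rep_Gf hAB rAB.
  - have [A [hA rA]] := Gf_rep gx; have [C [hC' rC]] := Gf_rep gz.
    have [B hB rB] := diff_gen ipP hC hx hy hA hC' rA rC hc'.
    by split => //; apply: rep_Gf hB rB.
  - have [A [hA rA]] := Gf_rep gy; have [C [hC' rC]] := Gf_rep gz.
    rewrite form_sum_comm in rC.
    have [B hB rB] := diff_gen ipP hC hy hx hA hC' rA rC (cond_sym hc').
    by split => //; apply: rep_Gf hB rB.
exists (phi ip); split.
- by move=> t /phiP [].
- move=> x y gx gy e.
  have [hpx [epx rpx]] := phiP gx; have [hpy [epy rpy]] := phiP gy.
  apply: (form_ext gx.1 gy.1); first by rewrite -epx -epy e.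
  move=> u v hu hv; rewrite rpx // rpy ?e //; rewrite -epy -e epx //.
- move=> A hA; have [hf rf] := form_ofP ipP hA.
  have g := rep_Gf hf hA rf.
  by exists (form_of ip A) => //; apply: phi_eq.
- exact: (phi_eq ipP (Gf_zero ipP) (Vop_zero ipP) (rep_zero ipP)).
- move=> x y gx gy.
  have [hpx [epx rpx]] := phiP gx; have [hpy [epy rpy]] := phiP gy.
  have bx : oper_bounded ip (phi ip x) <-> form_bounded ip x.
    split; [exact: bnd_of_oper gx.1 (phiP gx).2 | exact: bnd_of_form gx.1 (phiP gx).2].
  have by' : oper_bounded ip (phi ip y) <-> form_bounded ip y.
    split; [exact: bnd_of_oper gy.1 (phiP gy).2 | exact: bnd_of_form gy.1 (phiP gy).2].
  have E : (oper_bounded ip (phi ip x) \/ oper_bounded ip (phi ip y) \/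
            odom (phi ip x) = odom (phi ip y)) =
           (form_bounded ip x \/ form_bounded ip y \/ fdom x = fdom y).
    by apply: propext; rewrite epx epy; tauto.
  rewrite /oper_oplusD /restrict_op /form_oplus E.
  case: asboolP => hc //=.
  have hc' : cond ip x y := hc.
  have [hs hAB rAB] := sum_gen ipP gx.1 gy.1 hpx hpy (phiP gx).2 (phiP gy).2 hc'.
  have gs := rep_Gf hs hAB rAB.
  by rewrite asboolT //=; congr Some; symmetry; apply: phi_eq.
Qed.
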